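(* For every positive integer $n$, the Bell number $\mathrm{B}_n$ satisfies \[ \mathrm{B}_n=\sum_{k=1}^n(-1)^{n-k}\Biggl[\sum_{\ell=1}^{k}L(k,\ell)\Biggr]S(n,k), \] where $L(k,\ell)$ are the Lah numbers and $S(n,k)$ are the Stirling numbers of the second kind.
   Context: The Bell numbers $\mathrm{B}_n$ ($n\ge 0$) are defined by the generating function $e^{e^x-1}=\sum_{k=0}^\infty \mathrm{B}_k\frac{x^k}{k!}$; $\mathrm{B}_n$ is the number of partitions of an $n$-element set into nonempty subsets. The Stirling numbers of the second kind are $S(n,k)=\frac1{k!}\sum_{i=0}^k(-1)^i\binom{k}{i}(k-i)^n$, equivalently the number of partitions of an $n$-element set into $k$ nonempty subsets. The Lah numbers are $L(n,k)=\binom{n-1}{k-1}\frac{n!}{k!}$ for $n\ge k\ge 1$, equivalently the number of partitions of an $n$-element set into $k$ nonempty linearly ordered subsets. *)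

(* Defs.v *)
From mathcomp Require Import all_boot all_order all_algebra.
Set Implicit Arguments. Unset Strict Implicit. Unset Printing Implicit Defensive.
Import Order.TTheory GRing.Theory Num.Theory.
Local Open Scope ring_scope.

(* Bell number B_n: the number of partitions of an n-element set ('I_n)
   into nonempty blocks (mathcomp's [partition] excludes the empty block). *)
Definition bell (n : nat) : nat :=
  #|[set P : {set {set 'I_n}} | partition P [set: 'I_n]]|.

Definition stirling2 (n k : nat) : rat :=
  (k`!%:R)^-1 * \sum_(0 <= i < k.+1) (-1) ^+ i * ('C(k, i) * (k - i) ^ n)%:R.

(* Lah numbers L(n,k) = C(n-1,k-1) * n!/k!  (used for n >= k >= 1). *)
Definition lah (n k : nat) : rat :=
  'C(n.-1, k.-1)%:R * (n`!%:R / k`!%:R).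

(* Main.v *)
Require Import Defs.
From mathcomp Require Import all_boot all_order all_algebra.
From mathcomp Require Import ring lra zify.

Module M1.
Set Implicit Arguments. Unset Strict Implicit. Unset Printing Implicit Defensive.
Import Order.TTheory GRing.Theory Num.Theory.

Section Comb.
Lemma blk_mem n (P : {set {set 'I_n}}) (hP : partition P [set: 'I_n]) (x : 'I_n) :
  pblock P x \in P.
Proof. by apply: pblock_mem; rewrite (cover_partition hP) inE. Qed.

Definition blk n (P : {set {set 'I_n}}) (hP : partition P [set: 'I_n]) (x : 'I_n)
  : {B : {set 'I_n} | B \in P} := exist _ (pblock P x) (blk_mem hP x).

Lemma blk_surj n (P : {set {set 'I_n}}) (hP : partition P [set: 'I_n])
  (b : {B : {set 'I_n} | B \in P}) : exists x, blk hP x = b.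
Proof.
case: b => B hB.
have /set0Pn[x Bx] : B != set0 by apply: (partition_neq0 hP).
exists x; apply: val_inj => /=.
exact: def_pblock (partition_trivIset hP) hB Bx.
Qed.

Lemma blk_eq n (P : {set {set 'I_n}}) (hP : partition P [set: 'I_n]) x y :
  (blk hP x == blk hP y) = (y \in pblock P x).
Proof.
rewrite -val_eqE /= eq_pblock //; first exact: partition_trivIset hP.
by rewrite (cover_partition hP) inE.
Qed.

Lemma pp_char n m (P : {set {set 'I_n}}) (hP : partition P [set: 'I_n])
  (f : {ffun 'I_n -> 'I_m}) :
  (preim_partition f [set: 'I_n] == P) =
  [forall x, forall y, (f x == f y) == (y \in pblock P x)].
Proof.
apply/eqP/forallP => [<- x | H].
  apply/forallP => y; apply/eqP.
  rewrite pblock_equivalence_partition ?inE //.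
  by move=> a b c _ _ _; split => // /eqP->.
rewrite -(equivalence_partition_pblock hP) /preim_partition /equivalence_partition.
apply: eq_in_imset => x _; apply/setP => y; rewrite !inE.
by move/forallP: (H x) => /(_ y) /eqP.
Qed.

Lemma count_fibers n m (x0 : 'I_n) (P : {set {set 'I_n}}) (hP : partition P [set: 'I_n]) :
  #|[set f : {ffun 'I_n -> 'I_m} | preim_partition f [set: 'I_n] == P]| = m ^_ #|P|.
Proof.
have -> : m ^_ #|P| = #|[set g : {ffun {B : {set 'I_n} | B \in P} -> 'I_m} | injectiveb g]|.
  by rewrite card_inj_ffuns card_ord card_sig; congr (_ ^_ _); apply: eq_card.
pose Phi (g : {ffun {B : {set 'I_n} | B \in P} -> 'I_m}) :=
  [ffun x => g (blk hP x)].
rewrite -(card_in_imset (f := Phi)); last first.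
  move=> g1 g2 _ _ /ffunP E; apply/ffunP => b.
  have [x <-] := blk_surj hP b.
  by have := E x; rewrite !ffunE.
congr #|pred_of_set _|; apply/setP => f; rewrite inE (pp_char hP).
apply/forallP/imsetP => [H | [g]].
  pose g := [ffun b : {B : {set 'I_n} | B \in P} => f (odflt x0 [pick z in val b])].
  have gblk x : g (blk hP x) = f x.
    rewrite ffunE /=; apply/eqP; rewrite eq_sym.
    case: pickP => [z Hz|/(_ x)]; last by rewrite mem_pblock (cover_partition hP) inE.
    by move/forallP: (H x) => /(_ z) /eqP ->.
  exists g.
    rewrite inE; apply/injectiveP => b1 b2.
    have [x1 <-] := blk_surj hP b1; have [x2 <-] := blk_surj hP b2.
    rewrite !gblk => e; apply/eqP; rewrite blk_eq.
    by move/forallP: (H x1) => /(_ x2) /eqP <-; rewrite e.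
  by apply/ffunP => x; rewrite ffunE gblk.
rewrite inE => /injectiveP ginj -> x; apply/forallP => y.
by rewrite !ffunE (inj_eq ginj) blk_eq.
Qed.
End Comb.

End M1.
Import M1.

Module M2.
Set Implicit Arguments. Unset Strict Implicit. Unset Printing Implicit Defensive.
Import Order.TTheory GRing.Theory Num.Theory.

Lemma pow_sum n m (x0 : 'I_n) :
  m ^ n = \sum_(P : {set {set 'I_n}} | partition P [set: 'I_n]) m ^_ #|P|.
Proof.
have -> : m ^ n = \sum_(f : {ffun 'I_n -> 'I_m}) 1.
  by rewrite sum1_card card_ffun !card_ord.
rewrite (partition_big (fun f : {ffun 'I_n -> 'I_m} => preim_partition f [set: 'I_n])
   (fun P => partition P [set: 'I_n])) /=; last by move=> f _; apply: preim_partitionP.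
apply: eq_bigr => P hP; rewrite -(count_fibers m x0 hP) -sum1_card.
by apply: eq_bigl => f; rewrite inE.
Qed.

Lemma card_part_le n (P : {set {set 'I_n}}) : partition P [set: 'I_n] -> #|P| <= n.
Proof.
move=> hP; have := card_partition hP; rewrite cardsT card_ord => e.
apply: (@leq_trans (\sum_(B in P) #|B|)); last by rewrite -e.
rewrite -sum1_card; apply: leq_sum => B PB.
by rewrite card_gt0; apply: (partition_neq0 hP).
Qed.

Definition pk n k := #|[set P : {set {set 'I_n}} | partition P [set: 'I_n] & #|P| == k]|.

Lemma group_sum n (F : nat -> nat) :
  \sum_(P : {set {set 'I_n}} | partition P [set: 'I_n]) F #|P| =
  \sum_(k < n.+1) pk n k * F k.
Proof.
rewrite (partition_big (fun P : {set {set 'I_n}} => (inord #|P| : 'I_n.+1)) predT) //=.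
apply: eq_bigr => k _.
rewrite -sum_nat_const /pk; apply: eq_big => P; rewrite ?inE.
  case hP: (partition P _) => //=.
  by rewrite -val_eqE /= inordK // ltnS card_part_le.
move=> /andP[hP /eqP <-]; rewrite inordK // ltnS card_part_le //.
Qed.

Lemma bell_pk n : bell n = \sum_(k < n.+1) pk n k.
Proof.
rewrite /bell -sum1_card.
have := group_sum n (fun _ => 1); rewrite /= => e.
have -> : \sum_(k < n.+1) pk n k = \sum_(k < n.+1) pk n k * 1.
  by apply: eq_bigr => k _; rewrite muln1.
rewrite -e; apply: eq_bigl => P; by rewrite inE.
Qed.

Lemma pow_pk n m (x0 : 'I_n) : m ^ n = \sum_(k < n.+1) pk n k * m ^_ k.
Proof. by rewrite (pow_sum m x0) group_sum. Qed.

End M2.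
Import M2.

Module M3.
Set Implicit Arguments. Unset Strict Implicit. Unset Printing Implicit Defensive.
Import Order.TTheory GRing.Theory Num.Theory.

Lemma binprod k i l : ('C(k,i) * 'C(k-i,l) = 'C(k,l) * 'C(k-l,i))%N.
Proof.
have [hil|hil] := leqP (i + l) k; last first.
  have [hik|hik] := leqP i k.
    rewrite (@bin_small (k-i) l) ?muln0; last by lia.
    have [hlk|hlk] := leqP l k.
      by rewrite (@bin_small (k-l) i) ?muln0 //; lia.
    by rewrite (@bin_small k l).
  by rewrite (@bin_small k i) // (@bin_small (k-l) i) ?muln0 //; lia.
have e1 := @bin_fact k i ltac:(lia).
have e2 := @bin_fact (k-i) l ltac:(lia).
have e3 := @bin_fact k l ltac:(lia).
have e4 := @bin_fact (k-l) i ltac:(lia).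
have e5 : (k - i - l = k - l - i)%N by lia.
apply/eqP; rewrite -(@eqn_pmul2r (i`! * l`! * (k-i-l)`!)); last first.
  by rewrite !muln_gt0 !fact_gt0.
apply/eqP.
transitivity (k`!).
  by rewrite -e1 -e2; ring.
by rewrite -e3 -e4 e5; ring.
Qed.

Local Open Scope ring_scope.

Lemma alt_bin a K : (a <= K)%N ->
  \sum_(i < K.+1) (-1)^+i * ('C(a,i))%:R = (a == 0)%:R :> rat.
Proof.
move=> aK.
have := exprDn (1 : rat) (-1) a; rewrite subrr expr0n => ->.
rewrite (big_ord_widen K.+1 (fun i => 1 ^+ (a - i) * (-1) ^+ i *+ 'C(a, i))) //.
rewrite [RHS]big_mkcond /=; apply: eq_bigr => i _.
case: ifP => hi; first by rewrite expr1n mul1r mulr_natr.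
by rewrite bin_small ?mulr0 // ltnNge -ltnS hi.
Qed.

Lemma alt_sum k l :
  \sum_(i < k.+1) (-1)^+i * ('C(k,i) * (k-i)^_l)%:R = (l == k)%:R * k`!%:R :> rat.
Proof.
have [lk|kl] := leqP l k; last first.
  rewrite big1 ?(gtn_eqF kl) ?mul0r // => i _.
  by rewrite -bin_ffact mulnA binprod (@bin_small k l) // !mul0n mulr0.
transitivity (('C(k,l) * l`!)%:R * \sum_(i < k.+1) (-1)^+i * ('C(k-l,i))%:R : rat).
  rewrite mulr_sumr; apply: eq_bigr => i _.
  rewrite -bin_ffact mulnA binprod !natrM; ring.
rewrite alt_bin ?leq_subr //.
have [->|ne] := eqVneq l k; first by rewrite subnn binn mul1n eqxx mulr1 mul1r.
rewrite (_ : (k - l == 0)%N = false) ?mulr0 ?mul0r //.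
by apply/negbTE; rewrite subn_eq0 -ltnNge ltn_neqAle ne.
Qed.

Lemma coef_unique n N (c : nat -> rat) :
  (forall m, (m ^ n)%:R = \sum_(l < N) c l * (m ^_ l)%:R) ->
  forall k, stirling2 n k = if (k < N)%N then c k else 0.
Proof.
move=> H k; rewrite /stirling2 big_mkord.
have -> : \sum_(i < k.+1) (-1) ^+ i * ('C(k, i) * (k - i) ^ n)%:R =
   \sum_(l < N) c l * ((nat_of_ord l == k)%:R * k`!%:R).
  transitivity (\sum_(i < k.+1) \sum_(l < N) c l * ((-1) ^+ i * ('C(k, i) * (k - i) ^_ l)%:R)).
    apply: eq_bigr => i _; rewrite natrM H mulr_sumr mulr_sumr.
    by apply: eq_bigr => l _; rewrite natrM; ring.
  rewrite exchange_big; apply: eq_bigr => l _; rewrite -mulr_sumr alt_sum //.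
have kf : k`!%:R != 0 :> rat by rewrite pnatr_eq0 -lt0n fact_gt0.
case: ifP => kN.
  rewrite (bigD1 (Ordinal kN)) //= eqxx big1 ?addr0.
    by rewrite mul1r mulrCA mulVf // mulr1.
  by move=> l; rewrite -val_eqE /= => /negbTE ->; rewrite !mul0r mulr0.
rewrite big1 ?mulr0 // => l _.
by rewrite (_ : (nat_of_ord l == k) = false) ?mul0r ?mulr0 //; apply/negbTE; apply: contraFneq kN => <-.
Qed.

End M3.
Import M3.

Module M4.
Set Implicit Arguments. Unset Strict Implicit. Unset Printing Implicit Defensive.
Import Order.TTheory GRing.Theory Num.Theory.

Lemma natN k l : l < k ->
  'C(k.+1, l.+1) * k.+2 = l.+2 * 'C(k, l) + (l.+1 + k.+2) * 'C(k, l.+1).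
Proof.
move=> lk; rewrite binS.
have := mul_bin_left k l.
have [d ->] : exists d, k = l + d.+1 by exists (k - l.+1); lia.
rewrite (_ : l + d.+1 - l = d.+1); last by lia.
move: ('C(_, l.+1)) ('C(_, l)) => a b h; nia.
Qed.

Local Open Scope ring_scope.

Definition ff k (x : rat) := \prod_(i < k) (x - i%:R).
Definition rise k (x : rat) := \prod_(i < k) (x + i%:R).

Lemma ffS k x : ff k.+1 x = ff k x * (x - k%:R).
Proof. by rewrite /ff big_ord_recr. Qed.
Lemma riseS k x : rise k.+1 x = rise k x * (x + k%:R).
Proof. by rewrite /rise big_ord_recr. Qed.

Lemma ff_nat m k : ff k m%:R = (m ^_ k)%:R.
Proof.
elim: k => [|k IH]; first by rewrite /ff big_ord0.
rewrite ffS IH ffactnSr natrM.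
have [km|km] := leqP k m; first by rewrite natrB.
by rewrite (ffact_small km) !mul0r.
Qed.

Lemma ff_neg k x : ff k (- x) = (-1)^+k * rise k x.
Proof.
elim: k => [|k IH]; first by rewrite /ff /rise !big_ord0 mulr1.
by rewrite ffS riseS IH exprS; ring.
Qed.

Definition cl (k l : nat) : rat :=
  if l == 0%N then (k == 0%N)%:R else if (l <= k)%N then lah k l else 0.

Lemma cl_rec k l : (l < k)%N ->
  cl k.+1 l.+1 = cl k l + (l.+1 + k)%:R * cl k l.+1.
Proof.
move=> lk; rewrite /cl /= ltnS ltnW // lk.
case: k lk => // k lk.
have f1 : forall j, j`!%:R != 0 :> rat by move=> j; rewrite pnatr_eq0 -lt0n fact_gt0.
case: l lk => [|l] lk.
  rewrite /lah /= !bin0 !factS fact0 !natrM !natrD -!natr1; field; rewrite -?natr1 ?f1 //.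
rewrite ltnS in lk.
rewrite /lah /=.
have N := natN lk.
have NR : ('C(k.+1, l.+1))%:R * (k.+2)%:R =
   (l.+2)%:R * ('C(k, l))%:R + (l.+1 + k.+2)%:R * ('C(k, l.+1))%:R :> rat.
  by rewrite -!natrM -natrD N.
have NR' : ('C(k.+1, l.+1))%:R = ((l.+2)%:R * ('C(k, l))%:R + (l.+1 + k.+2)%:R * ('C(k, l.+1))%:R) / (k.+2)%:R :> rat.
  by rewrite -NR mulfK // pnatr_eq0.
have hl := ler0n rat l; have hk := ler0n rat k.
have hf := f1 l; have hf' := f1 k.
rewrite NR' !factS !natrM !natrD -!natr1; field.
rewrite /=; repeat (apply/andP; split); try done; apply/eqP; lra.
Qed.

Lemma cl_kk k : cl k k = 1.
Proof.
rewrite /cl; case: k => //= k; rewrite leqnn /lah /= binn mul1r mulfV //.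
by rewrite pnatr_eq0 -lt0n fact_gt0.
Qed.

Lemma rise_lah k x : rise k x = \sum_(l < k.+1) cl k l * ff l x.
Proof.
elim: k => [|k IH].
  by rewrite /rise big_ord0 big_ord1 /cl /= /ff big_ord0 !mulr1.
rewrite riseS IH mulr_suml.
have E l : ff l x * (x + k%:R) = ff l.+1 x + (l + k)%:R * ff l x.
  by rewrite ffS natrD; ring.
transitivity (\sum_(l < k.+1) cl k l * ff l.+1 x + \sum_(l < k.+1) cl k l * (l+k)%:R * ff l x).
  by rewrite -big_split; apply: eq_bigr => l _ /=; rewrite -mulrA E; ring.
rewrite big_ord_recr /= [X in _ + X]big_ord_recl /=.
rewrite [RHS]big_ord_recl [in RHS]big_ord_recr /=.
have c0 : cl k.+1 0 = 0 by [].
have c0' : cl k 0 * (0 + k)%:R = 0 by rewrite /cl /=; case: (k) => //= ?; rewrite mul0r.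
rewrite c0 c0' !cl_kk /bump /= !add1n.
have -> : \sum_(i < k) cl k.+1 i.+1 * ff i.+1 x
   = \sum_(i < k) cl k i * ff i.+1 x +
     \sum_(i < k) cl k i.+1 * (i.+1 + k)%:R * ff i.+1 x.
  rewrite -big_split; apply: eq_bigr => i _ /=.
  rewrite cl_rec //; ring.
ring.
Qed.

End M4.
Import M4.

Set Implicit Arguments. Unset Strict Implicit. Unset Printing Implicit Defensive.
Import Order.TTheory GRing.Theory Num.Theory.
Local Open Scope ring_scope.

Lemma S_pk n (x0 : 'I_n) k : stirling2 n k = if (k < n.+1)%N then (pk n k)%:R else 0.
Proof.
apply: (coef_unique (c := fun l => (pk n l)%:R)) => m.
rewrite (pow_pk m x0) natr_sum; apply: eq_bigr => l _; by rewrite natrM.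
Qed.

Lemma poly_id n (x0 : 'I_n) (x : rat) :
  x ^+ n = \sum_(k < n.+1) stirling2 n k * ff k x.
Proof.
pose q : {poly rat} := 'X^n - \sum_(k < n.+1) stirling2 n k *: \prod_(i < k) ('X - (i%:R)%:P).
have qx y : q.[y] = y ^+ n - \sum_(k < n.+1) stirling2 n k * ff k y.
  rewrite /q hornerD hornerN hornerXn horner_sum; congr (_ - _).
  apply: eq_bigr => k _; rewrite hornerZ horner_prod; congr (_ * _).
  by apply: eq_bigr => i _; rewrite hornerXsubC.
have qm m : q.[m%:R] = 0.
  rewrite qx -natrX (pow_pk m x0) natr_sum; apply/eqP; rewrite subr_eq0; apply/eqP.
  apply: eq_bigr => k _; by rewrite (S_pk x0) ltn_ord ff_nat natrM.
have q0 : q = 0.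
  apply/eqP; apply: contraT => qn0.
  have := max_poly_roots qn0 (rs := [seq i%:R | i <- iota 0 (size q)]).
  rewrite size_map size_iota ltnn; apply.
    by apply/allP => y /mapP [i _ ->]; rewrite /root qm.
  rewrite map_inj_uniq ?iota_uniq // => a b /eqP; by rewrite eqr_nat => /eqP.
by have := qx x; rewrite q0 horner0 => /esym/eqP; rewrite subr_eq0 => /eqP.
Qed.

Lemma sgn2 n : (-1) ^+ n * (-1) ^+ n = 1 :> rat.
Proof. by rewrite -exprD -signr_odd addnn odd_double. Qed.

Lemma rise_wide k n x : (k <= n)%N ->
  rise k x = \sum_(l < n.+1) cl k l * ff l x.
Proof.
move=> kn; rewrite rise_lah (big_ord_widen n.+1 (fun l => cl k l * ff l x)) //.
rewrite [LHS]big_mkcond /=; apply: eq_bigr => l _; case: ifP => // hl.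
rewrite /cl; case: eqP => [e|_]; first by rewrite e in hl.
by rewrite -ltnS hl mul0r.
Qed.

Lemma cl_sum k n : (0 < k)%N -> (k <= n)%N ->
  \sum_(l < n.+1) cl k l = \sum_(1 <= l < k.+1) lah k l.
Proof.
move=> k0 kn.
rewrite -(big_mkord xpredT) big_ltn // (big_cat_nat _ (n := k.+1)) //=.
rewrite [X in _ + (_ + X)]big_nat_cond [X in _ + (_ + X)]big1; last first.
  move=> l /andP[/andP[hl _] _]; rewrite /cl; case: eqP => [e|_]; first by rewrite e in hl.
  by rewrite leqNgt hl.
rewrite addr0 /cl /= (negbTE (lt0n_neq0 k0)) add0r.
apply: eq_big_nat => l /andP[l1 lk]; rewrite (negbTE (lt0n_neq0 l1)).
by rewrite -ltnS lk.
Qed.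

Theorem theorem1 (n : nat) : (0 < n)%N ->
  (bell n)%:R =
    \sum_(1 <= k < n.+1)
      (-1) ^+ (n - k) * (\sum_(1 <= l < k.+1) lah k l) * stirling2 n k :> rat.
Proof.
move=> n0; pose x0 : 'I_n := Ordinal n0.
have hb : (bell n)%:R = \sum_(k < n.+1) stirling2 n k :> rat.
  rewrite bell_pk natr_sum; apply: eq_bigr => k _; by rewrite (S_pk x0) ltn_ord.
pose d l := \sum_(k < n.+1) (-1) ^+ (n - k) * stirling2 n k * cl k l.
have hd : forall m : nat, (m ^ n)%:R = \sum_(l < n.+1) d l * (m ^_ l)%:R :> rat.
  move=> m.
  have e := poly_id x0 (- m%:R).
  rewrite exprNn in e.
  transitivity ((-1) ^+ n * ((-1) ^+ n * (m%:R) ^+ n) : rat).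
    by rewrite mulrA sgn2 mul1r natrX.
  rewrite e mulr_sumr.
  transitivity (\sum_(k < n.+1) \sum_(l < n.+1) (-1) ^+ (n - k) * stirling2 n k * cl k l * (m ^_ l)%:R).
    apply: eq_bigr => k _.
    have kn : (k <= n)%N by rewrite -ltnS ltn_ord.
    rewrite ff_neg (rise_wide _ kn).
    rewrite !mulr_sumr; apply: eq_bigr => l _; rewrite ff_nat.
    have -> : (-1) ^+ n = (-1) ^+ (n - k) * (-1) ^+ k :> rat.
      by rewrite -exprD subnK // -ltnS ltn_ord.
    have s2 := sgn2 k.
    transitivity ((-1) ^+ (n - k) * stirling2 n k * cl k l * (m ^_ l)%:R * ((-1) ^+ k * (-1) ^+ k)); first ring.
    by rewrite s2 mulr1.
  rewrite exchange_big; apply: eq_bigr => l _; rewrite /d mulr_suml //.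
have hS := coef_unique hd.
rewrite hb.
transitivity (\sum_(k < n.+1) (-1) ^+ (n - k) * stirling2 n k * \sum_(l < n.+1) cl k l).
  transitivity (\sum_(l < n.+1) d l); first by apply: eq_bigr => l _; rewrite hS ltn_ord.
  rewrite /d exchange_big; apply: eq_bigr => k _; by rewrite mulr_sumr.
rewrite -(big_mkord xpredT (fun k => (-1) ^+ (n - k) * stirling2 n k * \sum_(l < n.+1) cl k l)) big_ltn //.
have -> : stirling2 n 0 = 0.
  by rewrite /stirling2 big_nat1 /= expr0 mul1r bin0 exp0n // muln0 mulr0.
rewrite mulr0 mul0r add0r; apply: eq_big_nat => k /andP[k1 kn].
rewrite cl_sum // -?ltnS //; ring.
Qed.
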